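(* $$\sigma(4,3)=120\lambda(7)-96\lambda(2)\lambda(5),\qquad \sigma(3,4)=-80\lambda(7)+8\lambda(3)\lambda(4)+\frac{176}{3}\lambda(2)\lambda(5).$$
   Context: For integers $t\geq 1$, $n\geq 1$ let $S_n^{(t)}=\sum_{k=1}^{n}\frac{1}{(2k-1)^t}$, and for integers $s\geq 2$, $t\geq 1$ let $\sigma(s,t)=\sum_{n\geq 1}\frac{S_n^{(t)}}{n^s}$. For real $s>1$, $\lambda(s)=\sum_{n\geq 1}\frac{1}{(2n-1)^s}$. *)

(* Defs.v *)
From Stdlib Require Import Reals.
From Coquelicot Require Import Coquelicot.
Open Scope R_scope.

Definition oddHarm (t n : nat) : R :=
  sum_n_m (fun k => / (2 * INR k - 1) ^ t) 1 n.

(* sigma(s,t) = sum_{n>=1} S_n^{(t)} / n^s  (index shifted: term m is n = m+1) *)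
Definition sigmaST (s t : nat) : R :=
  Series (fun m => oddHarm t (S m) / (INR (S m)) ^ s).

(* lambda(s) = sum_{n>=1} 1/(2n-1)^s, for integer s >= 2 (index shifted) *)
Definition lambdaS (s : nat) : R :=
  Series (fun m => / (2 * INR m + 1) ^ s).

(* Main.v *)
Require Import Defs.
From Stdlib Require Import Reals Lra Lia.
From Coquelicot Require Import Coquelicot.
Open Scope R_scope.

(* Proof via finite stuffle/Tornheim (shuffle) relations for
   alternating double sums, truncated at 2M, then passage to the limit. *)

Fixpoint sm (f : nat -> R) (n : nat) : R :=
  match n with O => 0 | S k => sm f k + f (S k) end.

Lemma sm_ext f g n : (forall k, (1 <= k <= n)%nat -> f k = g k) -> sm f n = sm g n.
Proof. induction n; intros H; simpl; auto. rewrite IHn by (intros; apply H; lia). rewrite H by lia. reflexivity. Qed.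

Lemma sm_plus f g n : sm (fun k => f k + g k) n = sm f n + sm g n.
Proof. induction n; simpl; [ring|]. rewrite IHn; ring. Qed.
Lemma sm_minus f g n : sm (fun k => f k - g k) n = sm f n - sm g n.
Proof. induction n; simpl; [ring|]. rewrite IHn; ring. Qed.
Lemma sm_scal c f n : sm (fun k => c * f k) n = c * sm f n.
Proof. induction n; simpl; [ring|]. rewrite IHn; ring. Qed.

Lemma sm_shift h n : sm h (S n) = h 1%nat + sm (fun k => h (S k)) n.
Proof. induction n. simpl; ring. change (sm h (S (S n))) with (sm h (S n) + h (S (S n))). rewrite IHn. simpl. ring. Qed.

Lemma sm_refl h n : sm (fun x => h (S n - x)%nat) n = sm h n.
Proof.
  induction n. reflexivity.
  rewrite sm_shift. replace (S (S n) - 1)%nat with (S n) by lia.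
  change (sm h (S n)) with (sm h n + h (S n)).
  rewrite <- IHn. rewrite Rplus_comm. f_equal.
Qed.

Lemma sm_stuffle f g N :
  sm f N * sm g N = sm (fun z => g z * sm f (pred z)) N + sm (fun z => f z * sm g (pred z)) N + sm (fun z => f z * g z) N.
Proof. induction N; [simpl; ring|]. cbn [sm pred]. rewrite Rmult_plus_distr_r, !Rmult_plus_distr_l, IHN. ring. Qed.

Definition TriZ (f g : nat -> R) N := sm (fun z => sm (fun x => f x * g (z - x)%nat) (pred z)) N.

Lemma TriZ_y f g N : TriZ f g N = sm (fun y => g y * sm f (N - y)%nat) N.
Proof.
  unfold TriZ. induction N. reflexivity.
  change (sm (fun z => sm (fun x => f x * g (z - x)%nat) (pred z)) (S N)) with
    (sm (fun z => sm (fun x => f x * g (z - x)%nat) (pred z)) N + sm (fun x => f x * g (S N - x)%nat) N).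
  rewrite IHN. cbn [sm]. replace (S N - S N)%nat with O by lia. cbn [sm].
  rewrite Rmult_0_r, Rplus_0_r.
  rewrite (sm_ext (fun y => g y * sm f (S N - y)) (fun y => g y * sm f (N - y) + g y * f (S N - y)%nat)).
  2:{ intros k Hk. replace (S N - k)%nat with (S (N - k)) by lia. simpl. ring. }
  rewrite sm_plus. f_equal.
  rewrite <- (sm_refl (fun y => g y * f (S N - y)%nat) N).
  apply sm_ext. intros k Hk. replace (S N - (S N - k))%nat with k by lia. ring.
Qed.

Lemma TriZ_sym f g N : TriZ f g N = TriZ g f N.
Proof.
  unfold TriZ. apply sm_ext. intros z Hz. destruct z as [|n]; [lia|]. simpl pred.
  rewrite <- (sm_refl (fun x => g x * f (S n - x)%nat) n).
  apply sm_ext. intros k Hk. replace (S n - (S n - k))%nat with k by lia. ring.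
Qed.

Lemma inner_decomp F1 F2 n : sm (fun x => F1 x + F2 (S n - x)%nat) n = sm F1 n + sm F2 n.
Proof. rewrite sm_plus. f_equal. apply sm_refl. Qed.

Lemma sm_split2 h M : sm h (2*M) = sm (fun k => h (2*k)%nat) M + sm (fun k => h (2*k-1)%nat) M.
Proof.
  induction M. simpl; ring.
  replace (2 * S M)%nat with (S (S (2*M))) by lia. cbn [sm]. rewrite IHM.
  replace (S (S (2*M))) with (2 * S M)%nat by lia. replace (S (2*M)) with (2 * S M - 1)%nat by lia. ring.
Qed.

Lemma sm_nm f n : sum_n_m f 1 n = sm f n.
Proof.
  induction n. rewrite sum_n_m_zero by lia. reflexivity.
  rewrite sum_n_Sm by lia. rewrite IHn. reflexivity.
Qed.

Lemma sum_n_sm g n : sum_n g n = sm (fun k => g (k - 1)%nat) (S n).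
Proof.
  induction n. unfold sum_n. rewrite sum_n_n. cbn [sm]. replace (1-1)%nat with O by lia. symmetry; apply Rplus_0_l.
  unfold sum_n in *. rewrite sum_n_Sm by lia. rewrite IHn. simpl sm at 2.
  replace (S (S n) - 1)%nat with (S n) by lia. reflexivity.
Qed.


Lemma pow_sq1 s n : s*s = 1 -> s^n * s^n = 1.
Proof. intros H. rewrite <- Rpow_mult_distr, H. apply pow1. Qed.

Lemma sgnH1 s t m x : s*s = 1 -> t*t = 1 -> (x <= m)%nat -> t^m * (s*t)^x = s^x * t^(m-x).
Proof.
  intros Hs Ht Hx. replace m with ((m-x)+x)%nat at 1 by lia.
  rewrite pow_add, Rpow_mult_distr.
  rewrite <- (Rmult_1_r (s^x * t^(m-x))). rewrite <- (pow_sq1 t x Ht). ring.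
Qed.

Lemma sgnH2 s t m x : s*s = 1 -> t*t = 1 -> (x <= m)%nat -> s^m * (s*t)^(m-x) = s^x * t^(m-x).
Proof.
  intros Hs Ht Hx. replace m with ((m-x)+x)%nat at 1 by lia.
  rewrite pow_add, Rpow_mult_distr.
  rewrite <- (Rmult_1_r (s^x * t^(m-x))). rewrite <- (pow_sq1 s (m-x) Hs). ring.
Qed.

Definition P (s : R) (a N : nat) : R := sm (fun x => s^x / INR x ^ a) N.
Definition D (s t : R) (i c N : nat) : R := sm (fun z => t^z / INR z ^ c * P s i (pred z)) N.
Definition Tr (s : R) (a : nat) (t : R) (b N : nat) : R :=
  TriZ (fun x => s^x / INR x ^ a) (fun y => t^y / INR y ^ b) N.
Definition Sq (s : R) (a : nat) (t : R) (b N : nat) : R := P s a N * P t b N.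
Definition XT (s : R) (a : nat) (t : R) (b N : nat) : R := Sq s a t b N - Tr s a t b N.

Lemma stuffle s a t b u w N : u = s*t -> (a+b = w)%nat ->
  Sq s a t b N = D s t a b N + D t s b a N + P u w N.
Proof.
  intros Hu Hw. unfold Sq, P, D. rewrite sm_stuffle. f_equal.
  apply sm_ext. intros k Hk. subst. rewrite Rpow_mult_distr, pow_add.
  assert (INR k <> 0) by (apply not_0_INR; lia).
  field. split; apply pow_nonzero; auto.
Qed.

Lemma torn_1_6 s t u N : s*s = 1 -> t*t = 1 -> u = s*t ->
  Tr s 1 t 6 N = 1 * D u t 1 6 N + 1 * D u s 1 6 N + 1 * D u s 2 5 N + 1 * D u s 3 4 N + 1 * D u s 4 3 N + 1 * D u s 5 2 N + 1 * D u s 6 1 N.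
Proof.
  intros Hs Ht Hu. unfold Tr, TriZ, D. rewrite <- !sm_scal. rewrite <- !sm_plus.
  apply sm_ext. intros z Hz. destruct z as [|n]; [lia|]. cbn [pred]. cbv beta.
  transitivity (sm (fun x => (fun x : nat => 1 / INR (S n) ^ 6 / INR x ^ 1 * (t ^ (S n) * u ^ x)) x + (fun y : nat => 1 / INR (S n) ^ 6 / INR y ^ 1 * (s ^ (S n) * u ^ y) + 1 / INR (S n) ^ 5 / INR y ^ 2 * (s ^ (S n) * u ^ y) + 1 / INR (S n) ^ 4 / INR y ^ 3 * (s ^ (S n) * u ^ y) + 1 / INR (S n) ^ 3 / INR y ^ 4 * (s ^ (S n) * u ^ y) + 1 / INR (S n) ^ 2 / INR y ^ 5 * (s ^ (S n) * u ^ y) + 1 / INR (S n) ^ 1 / INR y ^ 6 * (s ^ (S n) * u ^ y)) (S n - x)%nat) n).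
  - apply sm_ext. intros x Hx. cbv beta. subst u.
    rewrite !(sgnH1 s t (S n) x Hs Ht ltac:(lia)).
    rewrite !(sgnH2 s t (S n) x Hs Ht ltac:(lia)).
    rewrite minus_INR by lia.
    assert (HX : INR x <> 0) by (apply not_0_INR; lia).
    assert (HXZ : INR x < INR (S n)) by (apply lt_INR; lia).
    pose proof (pos_INR x) as HP0.
    assert (HZ : INR (S n) <> 0) by lra.
    assert (HY : INR (S n) - INR x <> 0) by lra.
    field. repeat split; auto.
  - etransitivity. apply (inner_decomp (fun x : nat => 1 / INR (S n) ^ 6 / INR x ^ 1 * (t ^ (S n) * u ^ x)) (fun y : nat => 1 / INR (S n) ^ 6 / INR y ^ 1 * (s ^ (S n) * u ^ y) + 1 / INR (S n) ^ 5 / INR y ^ 2 * (s ^ (S n) * u ^ y) + 1 / INR (S n) ^ 4 / INR y ^ 3 * (s ^ (S n) * u ^ y) + 1 / INR (S n) ^ 3 / INR y ^ 4 * (s ^ (S n) * u ^ y) + 1 / INR (S n) ^ 2 / INR y ^ 5 * (s ^ (S n) * u ^ y) + 1 / INR (S n) ^ 1 / INR y ^ 6 * (s ^ (S n) * u ^ y)) n). unfold P. rewrite <- !sm_scal. rewrite <- !sm_plus.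
    apply sm_ext. intros k Hk. cbv beta.
    assert (INR k <> 0) by (apply not_0_INR; lia).
    assert (INR (S n) <> 0) by (apply not_0_INR; lia).
    field; auto.
Qed.

Lemma torn_2_5 s t u N : s*s = 1 -> t*t = 1 -> u = s*t ->
  Tr s 2 t 5 N = 5 * D u t 1 6 N + 1 * D u t 2 5 N + 5 * D u s 1 6 N + 4 * D u s 2 5 N + 3 * D u s 3 4 N + 2 * D u s 4 3 N + 1 * D u s 5 2 N.
Proof.
  intros Hs Ht Hu. unfold Tr, TriZ, D. rewrite <- !sm_scal. rewrite <- !sm_plus.
  apply sm_ext. intros z Hz. destruct z as [|n]; [lia|]. cbn [pred]. cbv beta.
  transitivity (sm (fun x => (fun x : nat => 5 / INR (S n) ^ 6 / INR x ^ 1 * (t ^ (S n) * u ^ x) + 1 / INR (S n) ^ 5 / INR x ^ 2 * (t ^ (S n) * u ^ x)) x + (fun y : nat => 5 / INR (S n) ^ 6 / INR y ^ 1 * (s ^ (S n) * u ^ y) + 4 / INR (S n) ^ 5 / INR y ^ 2 * (s ^ (S n) * u ^ y) + 3 / INR (S n) ^ 4 / INR y ^ 3 * (s ^ (S n) * u ^ y) + 2 / INR (S n) ^ 3 / INR y ^ 4 * (s ^ (S n) * u ^ y) + 1 / INR (S n) ^ 2 / INR y ^ 5 * (s ^ (S n) * u ^ y)) (S n - x)%nat) n).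
  - apply sm_ext. intros x Hx. cbv beta. subst u.
    rewrite !(sgnH1 s t (S n) x Hs Ht ltac:(lia)).
    rewrite !(sgnH2 s t (S n) x Hs Ht ltac:(lia)).
    rewrite minus_INR by lia.
    assert (HX : INR x <> 0) by (apply not_0_INR; lia).
    assert (HXZ : INR x < INR (S n)) by (apply lt_INR; lia).
    pose proof (pos_INR x) as HP0.
    assert (HZ : INR (S n) <> 0) by lra.
    assert (HY : INR (S n) - INR x <> 0) by lra.
    field. repeat split; auto.
  - etransitivity. apply (inner_decomp (fun x : nat => 5 / INR (S n) ^ 6 / INR x ^ 1 * (t ^ (S n) * u ^ x) + 1 / INR (S n) ^ 5 / INR x ^ 2 * (t ^ (S n) * u ^ x)) (fun y : nat => 5 / INR (S n) ^ 6 / INR y ^ 1 * (s ^ (S n) * u ^ y) + 4 / INR (S n) ^ 5 / INR y ^ 2 * (s ^ (S n) * u ^ y) + 3 / INR (S n) ^ 4 / INR y ^ 3 * (s ^ (S n) * u ^ y) + 2 / INR (S n) ^ 3 / INR y ^ 4 * (s ^ (S n) * u ^ y) + 1 / INR (S n) ^ 2 / INR y ^ 5 * (s ^ (S n) * u ^ y)) n). unfold P. rewrite <- !sm_scal. rewrite <- !sm_plus.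
    apply sm_ext. intros k Hk. cbv beta.
    assert (INR k <> 0) by (apply not_0_INR; lia).
    assert (INR (S n) <> 0) by (apply not_0_INR; lia).
    field; auto.
Qed.

Lemma torn_3_4 s t u N : s*s = 1 -> t*t = 1 -> u = s*t ->
  Tr s 3 t 4 N = 10 * D u t 1 6 N + 4 * D u t 2 5 N + 1 * D u t 3 4 N + 10 * D u s 1 6 N + 6 * D u s 2 5 N + 3 * D u s 3 4 N + 1 * D u s 4 3 N.
Proof.
  intros Hs Ht Hu. unfold Tr, TriZ, D. rewrite <- !sm_scal. rewrite <- !sm_plus.
  apply sm_ext. intros z Hz. destruct z as [|n]; [lia|]. cbn [pred]. cbv beta.
  transitivity (sm (fun x => (fun x : nat => 10 / INR (S n) ^ 6 / INR x ^ 1 * (t ^ (S n) * u ^ x) + 4 / INR (S n) ^ 5 / INR x ^ 2 * (t ^ (S n) * u ^ x) + 1 / INR (S n) ^ 4 / INR x ^ 3 * (t ^ (S n) * u ^ x)) x + (fun y : nat => 10 / INR (S n) ^ 6 / INR y ^ 1 * (s ^ (S n) * u ^ y) + 6 / INR (S n) ^ 5 / INR y ^ 2 * (s ^ (S n) * u ^ y) + 3 / INR (S n) ^ 4 / INR y ^ 3 * (s ^ (S n) * u ^ y) + 1 / INR (S n) ^ 3 / INR y ^ 4 * (s ^ (S n) * u ^ y)) (S n - x)%nat) n).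
  - apply sm_ext. intros x Hx. cbv beta. subst u.
    rewrite !(sgnH1 s t (S n) x Hs Ht ltac:(lia)).
    rewrite !(sgnH2 s t (S n) x Hs Ht ltac:(lia)).
    rewrite minus_INR by lia.
    assert (HX : INR x <> 0) by (apply not_0_INR; lia).
    assert (HXZ : INR x < INR (S n)) by (apply lt_INR; lia).
    pose proof (pos_INR x) as HP0.
    assert (HZ : INR (S n) <> 0) by lra.
    assert (HY : INR (S n) - INR x <> 0) by lra.
    field. repeat split; auto.
  - etransitivity. apply (inner_decomp (fun x : nat => 10 / INR (S n) ^ 6 / INR x ^ 1 * (t ^ (S n) * u ^ x) + 4 / INR (S n) ^ 5 / INR x ^ 2 * (t ^ (S n) * u ^ x) + 1 / INR (S n) ^ 4 / INR x ^ 3 * (t ^ (S n) * u ^ x)) (fun y : nat => 10 / INR (S n) ^ 6 / INR y ^ 1 * (s ^ (S n) * u ^ y) + 6 / INR (S n) ^ 5 / INR y ^ 2 * (s ^ (S n) * u ^ y) + 3 / INR (S n) ^ 4 / INR y ^ 3 * (s ^ (S n) * u ^ y) + 1 / INR (S n) ^ 3 / INR y ^ 4 * (s ^ (S n) * u ^ y)) n). unfold P. rewrite <- !sm_scal. rewrite <- !sm_plus.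
    apply sm_ext. intros k Hk. cbv beta.
    assert (INR k <> 0) by (apply not_0_INR; lia).
    assert (INR (S n) <> 0) by (apply not_0_INR; lia).
    field; auto.
Qed.

Lemma torn_4_3 s t u N : s*s = 1 -> t*t = 1 -> u = s*t ->
  Tr s 4 t 3 N = 10 * D u t 1 6 N + 6 * D u t 2 5 N + 3 * D u t 3 4 N + 1 * D u t 4 3 N + 10 * D u s 1 6 N + 4 * D u s 2 5 N + 1 * D u s 3 4 N.
Proof.
  intros Hs Ht Hu. unfold Tr, TriZ, D. rewrite <- !sm_scal. rewrite <- !sm_plus.
  apply sm_ext. intros z Hz. destruct z as [|n]; [lia|]. cbn [pred]. cbv beta.
  transitivity (sm (fun x => (fun x : nat => 10 / INR (S n) ^ 6 / INR x ^ 1 * (t ^ (S n) * u ^ x) + 6 / INR (S n) ^ 5 / INR x ^ 2 * (t ^ (S n) * u ^ x) + 3 / INR (S n) ^ 4 / INR x ^ 3 * (t ^ (S n) * u ^ x) + 1 / INR (S n) ^ 3 / INR x ^ 4 * (t ^ (S n) * u ^ x)) x + (fun y : nat => 10 / INR (S n) ^ 6 / INR y ^ 1 * (s ^ (S n) * u ^ y) + 4 / INR (S n) ^ 5 / INR y ^ 2 * (s ^ (S n) * u ^ y) + 1 / INR (S n) ^ 4 / INR y ^ 3 * (s ^ (S n) * u ^ y)) (S n - x)%nat) n).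
  - apply sm_ext. intros x Hx. cbv beta. subst u.
    rewrite !(sgnH1 s t (S n) x Hs Ht ltac:(lia)).
    rewrite !(sgnH2 s t (S n) x Hs Ht ltac:(lia)).
    rewrite minus_INR by lia.
    assert (HX : INR x <> 0) by (apply not_0_INR; lia).
    assert (HXZ : INR x < INR (S n)) by (apply lt_INR; lia).
    pose proof (pos_INR x) as HP0.
    assert (HZ : INR (S n) <> 0) by lra.
    assert (HY : INR (S n) - INR x <> 0) by lra.
    field. repeat split; auto.
  - etransitivity. apply (inner_decomp (fun x : nat => 10 / INR (S n) ^ 6 / INR x ^ 1 * (t ^ (S n) * u ^ x) + 6 / INR (S n) ^ 5 / INR x ^ 2 * (t ^ (S n) * u ^ x) + 3 / INR (S n) ^ 4 / INR x ^ 3 * (t ^ (S n) * u ^ x) + 1 / INR (S n) ^ 3 / INR x ^ 4 * (t ^ (S n) * u ^ x)) (fun y : nat => 10 / INR (S n) ^ 6 / INR y ^ 1 * (s ^ (S n) * u ^ y) + 4 / INR (S n) ^ 5 / INR y ^ 2 * (s ^ (S n) * u ^ y) + 1 / INR (S n) ^ 4 / INR y ^ 3 * (s ^ (S n) * u ^ y)) n). unfold P. rewrite <- !sm_scal. rewrite <- !sm_plus.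
    apply sm_ext. intros k Hk. cbv beta.
    assert (INR k <> 0) by (apply not_0_INR; lia).
    assert (INR (S n) <> 0) by (apply not_0_INR; lia).
    field; auto.
Qed.

Lemma torn_5_2 s t u N : s*s = 1 -> t*t = 1 -> u = s*t ->
  Tr s 5 t 2 N = 5 * D u t 1 6 N + 4 * D u t 2 5 N + 3 * D u t 3 4 N + 2 * D u t 4 3 N + 1 * D u t 5 2 N + 5 * D u s 1 6 N + 1 * D u s 2 5 N.
Proof.
  intros Hs Ht Hu. unfold Tr, TriZ, D. rewrite <- !sm_scal. rewrite <- !sm_plus.
  apply sm_ext. intros z Hz. destruct z as [|n]; [lia|]. cbn [pred]. cbv beta.
  transitivity (sm (fun x => (fun x : nat => 5 / INR (S n) ^ 6 / INR x ^ 1 * (t ^ (S n) * u ^ x) + 4 / INR (S n) ^ 5 / INR x ^ 2 * (t ^ (S n) * u ^ x) + 3 / INR (S n) ^ 4 / INR x ^ 3 * (t ^ (S n) * u ^ x) + 2 / INR (S n) ^ 3 / INR x ^ 4 * (t ^ (S n) * u ^ x) + 1 / INR (S n) ^ 2 / INR x ^ 5 * (t ^ (S n) * u ^ x)) x + (fun y : nat => 5 / INR (S n) ^ 6 / INR y ^ 1 * (s ^ (S n) * u ^ y) + 1 / INR (S n) ^ 5 / INR y ^ 2 * (s ^ (S n) * u ^ y)) (S n - x)%nat) n).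
  - apply sm_ext. intros x Hx. cbv beta. subst u.
    rewrite !(sgnH1 s t (S n) x Hs Ht ltac:(lia)).
    rewrite !(sgnH2 s t (S n) x Hs Ht ltac:(lia)).
    rewrite minus_INR by lia.
    assert (HX : INR x <> 0) by (apply not_0_INR; lia).
    assert (HXZ : INR x < INR (S n)) by (apply lt_INR; lia).
    pose proof (pos_INR x) as HP0.
    assert (HZ : INR (S n) <> 0) by lra.
    assert (HY : INR (S n) - INR x <> 0) by lra.
    field. repeat split; auto.
  - etransitivity. apply (inner_decomp (fun x : nat => 5 / INR (S n) ^ 6 / INR x ^ 1 * (t ^ (S n) * u ^ x) + 4 / INR (S n) ^ 5 / INR x ^ 2 * (t ^ (S n) * u ^ x) + 3 / INR (S n) ^ 4 / INR x ^ 3 * (t ^ (S n) * u ^ x) + 2 / INR (S n) ^ 3 / INR x ^ 4 * (t ^ (S n) * u ^ x) + 1 / INR (S n) ^ 2 / INR x ^ 5 * (t ^ (S n) * u ^ x)) (fun y : nat => 5 / INR (S n) ^ 6 / INR y ^ 1 * (s ^ (S n) * u ^ y) + 1 / INR (S n) ^ 5 / INR y ^ 2 * (s ^ (S n) * u ^ y)) n). unfold P. rewrite <- !sm_scal. rewrite <- !sm_plus.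
    apply sm_ext. intros k Hk. cbv beta.
    assert (INR k <> 0) by (apply not_0_INR; lia).
    assert (INR (S n) <> 0) by (apply not_0_INR; lia).
    field; auto.
Qed.

Lemma torn_6_1 s t u N : s*s = 1 -> t*t = 1 -> u = s*t ->
  Tr s 6 t 1 N = 1 * D u t 1 6 N + 1 * D u t 2 5 N + 1 * D u t 3 4 N + 1 * D u t 4 3 N + 1 * D u t 5 2 N + 1 * D u t 6 1 N + 1 * D u s 1 6 N.
Proof.
  intros Hs Ht Hu. unfold Tr, TriZ, D. rewrite <- !sm_scal. rewrite <- !sm_plus.
  apply sm_ext. intros z Hz. destruct z as [|n]; [lia|]. cbn [pred]. cbv beta.
  transitivity (sm (fun x => (fun x : nat => 1 / INR (S n) ^ 6 / INR x ^ 1 * (t ^ (S n) * u ^ x) + 1 / INR (S n) ^ 5 / INR x ^ 2 * (t ^ (S n) * u ^ x) + 1 / INR (S n) ^ 4 / INR x ^ 3 * (t ^ (S n) * u ^ x) + 1 / INR (S n) ^ 3 / INR x ^ 4 * (t ^ (S n) * u ^ x) + 1 / INR (S n) ^ 2 / INR x ^ 5 * (t ^ (S n) * u ^ x) + 1 / INR (S n) ^ 1 / INR x ^ 6 * (t ^ (S n) * u ^ x)) x + (fun y : nat => 1 / INR (S n) ^ 6 / INR y ^ 1 * (s ^ (S n) * u ^ y)) (S n - x)%nat) n).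
  - apply sm_ext. intros x Hx. cbv beta. subst u.
    rewrite !(sgnH1 s t (S n) x Hs Ht ltac:(lia)).
    rewrite !(sgnH2 s t (S n) x Hs Ht ltac:(lia)).
    rewrite minus_INR by lia.
    assert (HX : INR x <> 0) by (apply not_0_INR; lia).
    assert (HXZ : INR x < INR (S n)) by (apply lt_INR; lia).
    pose proof (pos_INR x) as HP0.
    assert (HZ : INR (S n) <> 0) by lra.
    assert (HY : INR (S n) - INR x <> 0) by lra.
    field. repeat split; auto.
  - etransitivity. apply (inner_decomp (fun x : nat => 1 / INR (S n) ^ 6 / INR x ^ 1 * (t ^ (S n) * u ^ x) + 1 / INR (S n) ^ 5 / INR x ^ 2 * (t ^ (S n) * u ^ x) + 1 / INR (S n) ^ 4 / INR x ^ 3 * (t ^ (S n) * u ^ x) + 1 / INR (S n) ^ 3 / INR x ^ 4 * (t ^ (S n) * u ^ x) + 1 / INR (S n) ^ 2 / INR x ^ 5 * (t ^ (S n) * u ^ x) + 1 / INR (S n) ^ 1 / INR x ^ 6 * (t ^ (S n) * u ^ x)) (fun y : nat => 1 / INR (S n) ^ 6 / INR y ^ 1 * (s ^ (S n) * u ^ y)) n). unfold P. rewrite <- !sm_scal. rewrite <- !sm_plus.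
    apply sm_ext. intros k Hk. cbv beta.
    assert (INR k <> 0) by (apply not_0_INR; lia).
    assert (INR (S n) <> 0) by (apply not_0_INR; lia).
    field; auto.
Qed.


Lemma sm_zero n : sm (fun _ => 0) n = 0.
Proof. induction n; simpl; [reflexivity|rewrite IHn; ring]. Qed.

Lemma pm1_odd k : (1 <= k)%nat -> (-1)^(2*k-1) = -1.
Proof. intros H. replace (2*k-1)%nat with (S (2*(k-1))) by lia. apply pow_1_odd. Qed.

Lemma INR2 k : INR (2*k) = 2 * INR k.
Proof. rewrite mult_INR. simpl. ring. Qed.

Lemma INR2m1 k : (1 <= k)%nat -> INR (2*k-1) = 2 * INR k - 1.
Proof. intros H. rewrite minus_INR by lia. rewrite INR2. simpl. ring. Qed.

Lemma inner_even h j : sm (fun x => (1 + (-1)^x) * h x) (S (2*j)) = 2 * sm (fun m => h (2*m)%nat) j.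
Proof.
  cbn [sm]. rewrite pow_1_odd. rewrite sm_split2.
  rewrite (sm_ext (fun k => (1 + (-1)^(2*k-1)) * h (2*k-1)%nat) (fun _ => 0)).
  2:{ intros k Hk. rewrite pm1_odd by lia. ring. }
  rewrite sm_zero. rewrite <- sm_scal. 
  transitivity (sm (fun k => 2 * h (2*k)%nat) j + 0 + 0); [|ring].
  f_equal; [|ring]. f_equal. apply sm_ext. intros k Hk. rewrite pow_1_even. ring.
Qed.

Lemma inner_odd h j : sm (fun x => (1 - (-1)^x) * h x) (S (2*j)) = 2 * sm (fun m => h (2*m-1)%nat) (S j).
Proof.
  cbn [sm]. rewrite pow_1_odd. rewrite sm_split2.
  rewrite (sm_ext (fun k => (1 - (-1)^(2*k)) * h (2*k)%nat) (fun _ => 0)).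
  2:{ intros k Hk. rewrite pow_1_even. ring. }
  rewrite sm_zero.
  rewrite (sm_ext (fun k => (1 - (-1)^(2*k-1)) * h (2*k-1)%nat) (fun k => 2 * h (2*k-1)%nat)).
  2:{ intros k Hk. rewrite pm1_odd by lia. ring. }
  rewrite sm_scal. replace (2 * S j - 1)%nat with (S (2*j)) by lia. ring.
Qed.

Lemma sq_even s k : s*s = 1 -> s^(2*k) = 1.
Proof. intros H. rewrite pow_mult. replace (s^2) with 1 by (simpl; nra). apply pow1. Qed.

Lemma sq_odd s k : s*s = 1 -> (1 <= k)%nat -> s^(2*k-1) = s.
Proof. intros H Hk. replace (2*k-1)%nat with (S (2*(k-1))) by lia. change (s^(S (2*(k-1)))) with (s * s^(2*(k-1))). rewrite sq_even by auto. ring. Qed.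

Lemma P_split s a M : s*s = 1 ->
  P s a (2*M) = s * sm (fun k => / (2 * INR k - 1)^a) M + / 2^a * P 1 a M.
Proof.
  intros Hs. unfold P at 1. rewrite sm_split2. rewrite Rplus_comm. f_equal.
  - rewrite <- sm_scal. apply sm_ext. intros k Hk. rewrite sq_odd by (try assumption; lia).
    rewrite INR2m1 by lia. unfold Rdiv. ring.
  - unfold P. rewrite <- sm_scal. apply sm_ext. intros k Hk. rewrite sq_even by auto.
    rewrite pow1, INR2. assert (INR k <> 0) by (apply not_0_INR; lia).
    rewrite Rpow_mult_distr. field. split; apply pow_nonzero; lra.
Qed.

Lemma dist i c M :
  D 1 1 i c (2*M) + D 1 (-1) i c (2*M) + D (-1) 1 i c (2*M) + D (-1) (-1) i c (2*M)
  = 4 / 2^(i+c)%nat * D 1 1 i c M.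
Proof.
  unfold D. rewrite <- !sm_plus.
  rewrite sm_split2.
  match goal with |- sm ?E ?M + sm ?O ?M = _ => rewrite (sm_ext O (fun _ => 0) M) end.
  2:{ intros k Hk. cbv beta. rewrite pm1_odd by lia. rewrite !pow1. unfold Rdiv. ring. }
  rewrite sm_zero, Rplus_0_r. rewrite <- sm_scal. apply sm_ext. intros k Hk. cbv beta.
  rewrite pow_1_even, !pow1.
  replace (pred (2*k)) with (S (2*(k-1))) by lia.
  transitivity (2 / INR (2*k)^c * sm (fun x => (1 + (-1)^x) * (/ INR x ^ i)) (S (2*(k-1)))).
  { transitivity (2 / INR (2*k)^c * (P 1 i (S (2*(k-1))) + P (-1) i (S (2*(k-1))))); [unfold Rdiv; ring|].
    f_equal. unfold P. rewrite <- sm_plus. apply sm_ext. intros x Hx. rewrite pow1. unfold Rdiv. ring. }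
  rewrite inner_even.
  assert (E : sm (fun m => / INR (2*m)%nat ^ i) (k-1) = / 2^i * P 1 i (pred k)).
  { unfold P. rewrite <- sm_scal. replace (pred k) with (k-1)%nat by lia. apply sm_ext. intros m Hm.
    rewrite INR2, pow1, Rpow_mult_distr. assert (INR m <> 0) by (apply not_0_INR; lia).
    field. split; [apply pow_nonzero; auto|apply pow_nonzero; lra]. }
  rewrite E. rewrite INR2. assert (INR k <> 0) by (apply not_0_INR; lia).
  rewrite pow_add. rewrite !Rpow_mult_distr.
  field. repeat split; try (apply pow_nonzero; auto); try (apply pow_nonzero; lra).
Qed.

Lemma target i c M : sm (fun k => oddHarm i k / INR k ^ c) M =
  2^c / 4 * (D 1 1 i c (2*M) + D 1 (-1) i c (2*M) - D (-1) 1 i c (2*M) - D (-1) (-1) i c (2*M)).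
Proof.
  unfold D. rewrite <- sm_plus, <- !sm_minus.
  rewrite sm_split2.
  match goal with |- _ = _ * (sm ?E ?M + sm ?O ?M) => rewrite (sm_ext O (fun _ => 0) M) end.
  2:{ intros k Hk. cbv beta. rewrite pm1_odd by lia. rewrite !pow1. unfold Rdiv. ring. }
  rewrite sm_zero, Rplus_0_r. rewrite <- sm_scal. apply sm_ext. intros k Hk. cbv beta.
  rewrite pow_1_even, !pow1.
  replace (pred (2*k)) with (S (2*(k-1))) by lia.
  transitivity (2^c/4 * (2 / INR (2*k)^c * sm (fun x => (1 - (-1)^x) * (/ INR x ^ i)) (S (2*(k-1))))).
  2:{ f_equal. transitivity (2 / INR (2*k)^c * (P 1 i (S (2*(k-1))) - P (-1) i (S (2*(k-1))))); [|unfold Rdiv; ring].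
    f_equal. unfold P. rewrite <- sm_minus. apply sm_ext. intros x Hx. rewrite pow1. unfold Rdiv. ring. }
  rewrite inner_odd. replace (S (k-1)) with k by lia.
  unfold oddHarm. rewrite sm_nm.
  rewrite (sm_ext (fun m => / INR (2*m-1)%nat ^ i) (fun m => / (2 * INR m - 1)^i)).
  2:{ intros m Hm. rewrite INR2m1 by lia. reflexivity. }
  rewrite INR2, Rpow_mult_distr. assert (INR k <> 0) by (apply not_0_INR; lia).
  field. split; apply pow_nonzero; lra.
Qed.


Lemma series_of_lim (g : nat -> R) (l : R) : is_lim_seq (sum_n g) l -> is_series g l.
Proof.
  intros H. apply is_series_Reals.
  assert (H' : Un_cv (fun n => sum_n g n) l) by (apply is_lim_seq_Reals; exact H).
  intros eps Heps. clear H. rename H' into H. destruct (H eps Heps) as [N HN]. exists N. intros n Hn.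
  rewrite <- sum_n_Reals. apply HN; auto.
Qed.

Lemma mono_lim (u : nat -> R) B : (forall n, u n <= u (S n)) -> (forall n, u n <= B) -> exists l : R, is_lim_seq u l.
Proof.
  intros H1 H2. destruct (growing_cv u H1) as [l Hl].
  { exists B. intros x [i ->]. apply H2. }
  exists l. apply is_lim_seq_Reals. exact Hl.
Qed.

Lemma sm_le f g n : (forall k, (1 <= k <= n)%nat -> f k <= g k) -> sm f n <= sm g n.
Proof. induction n; intros H; simpl; [lra|]. apply Rplus_le_compat; [apply IHn; intros; apply H; lia| apply H; lia]. Qed.

Lemma sm_abs f n : Rabs (sm f n) <= sm (fun k => Rabs (f k)) n.
Proof. induction n; simpl. rewrite Rabs_R0; lra. eapply Rle_trans; [apply Rabs_triang|]. lra. Qed.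

Lemma sm_inv2 N : sm (fun k => / INR k ^ 2) N <= 2 - 2 / (INR N + 1).
Proof.
  induction N. simpl. lra.
  cbn [sm]. rewrite S_INR. pose proof (pos_INR N) as HN. set (x := INR N) in *.
  assert (0 <= 2/(x+1) - 2/(x+1+1) - /(x+1)^2).
  { replace (2/(x+1) - 2/(x+1+1) - /(x+1)^2) with (x / ((x+1)^2 * (x+1+1))) by (field; lra).
    apply Rmult_le_pos; [lra|]. left. apply Rinv_0_lt_compat. apply Rmult_lt_0_compat; [apply pow_lt|]; lra. }
  lra.
Qed.

Lemma sm_inv2' N : sm (fun k => / INR k ^ 2) N <= 2.
Proof. pose proof (sm_inv2 N). pose proof (pos_INR N). assert (0 <= 2/(INR N + 1)) by (apply Rdiv_le_0_compat; lra). lra. Qed.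

Lemma inv_pow_le x a b : 1 <= x -> (a <= b)%nat -> / x ^ b <= / x ^ a.
Proof. intros Hx Hab. apply Rinv_le_contravar. apply pow_lt; lra. apply Rle_pow; auto. Qed.

Lemma INR_ge1 k : (1 <= k)%nat -> 1 <= INR k.
Proof. intros H. apply (le_INR 1 k) in H. simpl in H. exact H. Qed.

Lemma P1_nonneg a n : 0 <= P 1 a n.
Proof. unfold P. induction n; cbn [sm]; [lra|]. rewrite pow1. pose proof (pos_INR (S n)).
  assert (0 <= 1 / INR (S n) ^ a) by (apply Rdiv_le_0_compat; [lra|apply pow_lt; apply lt_0_INR; lia]). lra. Qed.

Lemma P1_le2 a n : (2 <= a)%nat -> P 1 a n <= 2.
Proof.
  intros Ha. eapply Rle_trans; [|apply (sm_inv2' n)]. apply sm_le. intros k Hk.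
  rewrite pow1. unfold Rdiv. rewrite Rmult_1_l. apply inv_pow_le; auto. apply INR_ge1; lia.
Qed.

Definition Zv (a : nat) : R := real (Lim_seq (P 1 a)).

Lemma Z_lim a : (2 <= a)%nat -> is_lim_seq (P 1 a) (Zv a).
Proof.
  intros Ha. destruct (mono_lim (P 1 a) 2) as [l Hl].
  - intros n. unfold P. cbn [sm]. rewrite pow1. assert (0 <= 1 / INR (S n) ^ a).
    { apply Rdiv_le_0_compat; [lra|apply pow_lt; apply lt_0_INR; lia]. } lra.
  - intros n. apply P1_le2; auto.
  - unfold Zv. rewrite (is_lim_seq_unique _ _ Hl). exact Hl.
Qed.

Definition Ov (a M : nat) : R := sm (fun k => / (2 * INR k - 1)^a) M.

Lemma Ov_lim a : (2 <= a)%nat -> is_lim_seq (Ov a) (lambdaS a).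
Proof.
  intros Ha.
  assert (Hpos : forall k, (1 <= k)%nat -> 0 < 2 * INR k - 1).
  { intros k Hk. pose proof (INR_ge1 k Hk). lra. }
  destruct (mono_lim (Ov a) 2) as [l Hl].
  - intros n. unfold Ov. cbn [sm]. assert (0 < / (2 * INR (S n) - 1)^a).
    { apply Rinv_0_lt_compat, pow_lt, Hpos; lia. } lra.
  - intros n. eapply Rle_trans; [|apply (sm_inv2' n)]. apply sm_le. intros k Hk.
    eapply Rle_trans. apply (Rinv_le_contravar (INR k ^ a)). apply pow_lt. apply lt_0_INR; lia.
    apply pow_incr. split. apply pos_INR. pose proof (INR_ge1 k ltac:(lia)). lra.
    apply inv_pow_le; auto. apply INR_ge1; lia.
  - assert (Hs : is_series (fun m => / (2 * INR m + 1)^a) l).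
    { apply series_of_lim. apply is_lim_seq_incr_1 in Hl. eapply is_lim_seq_ext; [|exact Hl].
      intros n. rewrite sum_n_sm. unfold Ov. apply sm_ext. intros k Hk.
      rewrite minus_INR by lia. replace (2 * (INR k - INR 1) + 1) with (2 * INR k - 1) by (simpl; ring). reflexivity. }
    unfold lambdaS. rewrite (is_series_unique _ _ Hs). exact Hl.
Qed.

Lemma subseq2 (u : nat -> R) l : is_lim_seq u l -> is_lim_seq (fun M => u (2*M)%nat) l.
Proof.
  intros H. apply (is_lim_seq_subseq u l (fun n => (2*n)%nat)); auto.
  intros P [N HN]. exists N. intros n Hn. apply HN. lia.
Qed.

Lemma lim_scal (u : nat -> R) (c l : R) : is_lim_seq u l -> is_lim_seq (fun n => c * u n) (c * l).
Proof. intros H. apply (is_lim_seq_mult' (fun _ => c) u c l); [apply is_lim_seq_const | exact H]. Qed.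

Definition Lm (s : R) (a : nat) : R := s * lambdaS a + / 2^a * Zv a.

Lemma lim_P s a : s*s = 1 -> (2 <= a)%nat -> is_lim_seq (fun M => P s a (2*M)) (Lm s a).
Proof.
  intros Hs Ha. eapply is_lim_seq_ext. intros M. symmetry. apply P_split; auto.
  unfold Lm. apply is_lim_seq_plus'; apply lim_scal; [apply Ov_lim|apply Z_lim]; auto.
Qed.

Lemma Z_eq a : (2 <= a)%nat -> Zv a = lambdaS a + / 2^a * Zv a.
Proof.
  intros Ha. pose proof (subseq2 _ _ (Z_lim a Ha)) as H1.
  pose proof (lim_P 1 a ltac:(ring) Ha) as H2.
  apply is_lim_seq_unique in H1. apply is_lim_seq_unique in H2. rewrite H1 in H2.
  injection H2 as H3. rewrite H3 at 1. unfold Lm. rewrite Rmult_1_l. reflexivity.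
Qed.

Lemma lim_Sq s a t b : s*s = 1 -> t*t = 1 -> (2 <= a)%nat -> (2 <= b)%nat ->
  is_lim_seq (fun M => Sq s a t b (2*M)) (Lm s a * Lm t b).
Proof. intros. unfold Sq. apply is_lim_seq_mult'; apply lim_P; auto. Qed.


Lemma sm_scal_r c f n : sm (fun k => f k * c) n = sm f n * c.
Proof. induction n; simpl; [ring|]. rewrite IHn; ring. Qed.

Lemma tail_bound (f : nat -> R) m y : (forall x, (1<=x)%nat -> Rabs (f x) <= / INR x) ->
  Rabs (sm f (m + y) - sm f m) <= INR y / (INR m + 1).
Proof.
  intros Hf. pose proof (pos_INR m) as Hm. induction y.
  - replace (m+0)%nat with m by lia. rewrite Rminus_diag_eq, Rabs_R0 by auto. simpl INR. unfold Rdiv. rewrite Rmult_0_l. lra.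
  - replace (m + S y)%nat with (S (m+y)) by lia. cbn [sm].
    replace (sm f (m + y) + f (S (m + y)) - sm f m) with ((sm f (m + y) - sm f m) + f (S (m+y))) by ring.
    eapply Rle_trans; [apply Rabs_triang|].
    pose proof (Hf (S (m+y)) ltac:(lia)) as H1.
    assert (H2 : / INR (S (m+y)) <= / (INR m + 1)).
    { apply Rinv_le_contravar; [lra|]. rewrite S_INR, plus_INR. pose proof (pos_INR y). lra. }
    rewrite S_INR. replace ((INR y + 1) / (INR m + 1)) with (INR y / (INR m + 1) + / (INR m + 1)) by (field; lra).
    lra.
Qed.

Lemma ineq1 Y Nr : 1 <= Y -> Y <= Nr -> / Y^4 * (Y / (Nr - Y + 1)) <= / (Nr * Y^2).
Proof.
  intros H1 H2.
  replace (/ Y^4 * (Y / (Nr - Y + 1))) with (/ (Y^3 * (Nr - Y + 1))) by (field; split; lra).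
  apply Rinv_le_contravar. apply Rmult_lt_0_compat; [lra|apply pow_lt; lra].
  assert (0 <= Y^2 * ((Y-1)*(Nr-Y))) by (apply Rmult_le_pos; [apply pow_le; lra| apply Rmult_le_pos; lra]).
  nra.
Qed.

Lemma sqtri_bound (f g : nat -> R) N :
  (forall x, (1<=x)%nat -> Rabs (f x) <= / INR x) ->
  (forall y, (1<=y)%nat -> Rabs (g y) <= / INR y ^ 4) -> (1 <= N)%nat ->
  Rabs (sm f N * sm g N - TriZ f g N) <= 2 / INR N.
Proof.
  intros Hf Hg HN. rewrite TriZ_y.
  rewrite Rmult_comm, <- sm_scal_r, <- sm_minus.
  eapply Rle_trans; [apply sm_abs|].
  assert (HNp : 0 < INR N) by (apply lt_0_INR; lia).
  eapply Rle_trans. apply (sm_le _ (fun y => / INR N * / INR y ^ 2)).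
  - intros y Hy. rewrite <- Rmult_minus_distr_l, Rabs_mult.
    pose proof (tail_bound f (N-y) y Hf) as Ht. replace (N - y + y)%nat with N in Ht by lia.
    rewrite minus_INR in Ht by lia.
    pose proof (INR_ge1 y ltac:(lia)) as Hy1. assert (INR y <= INR N) by (apply le_INR; lia).
    eapply Rle_trans. apply Rmult_le_compat; try apply Rabs_pos. apply Hg; lia. exact Ht.
    eapply Rle_trans. apply ineq1; auto. rewrite Rinv_mult. lra.
  - rewrite sm_scal. pose proof (sm_inv2' N). unfold Rdiv.
    rewrite Rmult_comm. apply Rmult_le_compat_r; [left; apply Rinv_0_lt_compat; auto| auto].
Qed.

Lemma lim_inv_S : is_lim_seq (fun n => / INR (S n)) 0.
Proof.
  apply (is_lim_seq_incr_1 (fun n => / INR n) 0).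
  replace (Finite 0) with (Rbar_inv p_infty) by reflexivity.
  apply is_lim_seq_inv. apply is_lim_seq_INR. discriminate.
Qed.

Lemma sqtri_lim (f g : nat -> R) :
  (forall x, (1<=x)%nat -> Rabs (f x) <= / INR x) ->
  (forall y, (1<=y)%nat -> Rabs (g y) <= / INR y ^ 4) ->
  is_lim_seq (fun N => sm f N * sm g N - TriZ f g N) 0.
Proof.
  intros Hf Hg.
  apply (is_lim_seq_le_le (fun n => (-4) * / INR (S n)) _ (fun n => 4 * / INR (S n))).
  - intros n. destruct n as [|n].
    + unfold TriZ. simpl. rewrite Rinv_1. lra.
    + pose proof (sqtri_bound f g (S n) Hf Hg ltac:(lia)) as H.
      repeat rewrite S_INR in *. pose proof (pos_INR n).
      assert (2 / (INR n + 1) <= 4 * / (INR n + 1 + 1)).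
      { apply (Rmult_le_reg_r ((INR n + 1) * (INR n + 1 + 1))). nra.
        field_simplify; try lra. }
      pose proof (Rle_abs (sm f (S n) * sm g (S n) - TriZ f g (S n))).
      pose proof (Rle_abs (- (sm f (S n) * sm g (S n) - TriZ f g (S n)))). rewrite Rabs_Ropp in *. lra.
  - replace (Finite 0) with (Finite (-4 * 0)) by (f_equal; ring). apply lim_scal. apply lim_inv_S.
  - replace (Finite 0) with (Finite (4 * 0)) by (f_equal; ring). apply lim_scal. apply lim_inv_S.
Qed.

Lemma abs_sgn s : s*s = 1 -> Rabs s = 1.
Proof. intros H. destruct (Rle_lt_dec 0 s). rewrite Rabs_pos_eq; nra. rewrite Rabs_left; nra. Qed.

Lemma sgn_term_bound s a k x : s*s = 1 -> (k <= a)%nat -> (1 <= x)%nat ->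
  Rabs (s^x / INR x ^ a) <= / INR x ^ k.
Proof.
  intros Hs Hk Hx. unfold Rdiv. rewrite Rabs_mult, <- RPow_abs, abs_sgn, pow1 by auto.
  pose proof (INR_ge1 x Hx).
  rewrite Rabs_pos_eq. rewrite Rmult_1_l. apply inv_pow_le; auto.
  left. apply Rinv_0_lt_compat, pow_lt; lra.
Qed.

Lemma lim_XT s a t b : s*s = 1 -> t*t = 1 -> (1 <= a)%nat -> (4 <= b)%nat ->
  is_lim_seq (fun M => XT s a t b (2*M)) 0.
Proof.
  intros Hs Ht Ha Hb. apply subseq2. unfold XT, Sq, Tr, P.
  apply sqtri_lim.
  - intros x Hx. pose proof (sgn_term_bound s a 1 x Hs Ha Hx). rewrite pow_1 in H. exact H.
  - intros y Hy. apply sgn_term_bound; auto.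
Qed.

Lemma lim_XT' s a t b : s*s = 1 -> t*t = 1 -> (4 <= a)%nat -> (1 <= b)%nat ->
  is_lim_seq (fun M => XT s a t b (2*M)) 0.
Proof.
  intros Hs Ht Ha Hb. apply subseq2. unfold XT, Sq, Tr, P.
  apply (is_lim_seq_ext (fun N => sm (fun x => t ^ x / INR x ^ b) N * sm (fun x => s ^ x / INR x ^ a) N
     - TriZ (fun y => t ^ y / INR y ^ b) (fun x => s ^ x / INR x ^ a) N)).
  { intros N. rewrite (TriZ_sym (fun y => t ^ y / INR y ^ b)). ring. }
  apply sqtri_lim.
  - intros x Hx. pose proof (sgn_term_bound t b 1 x Ht Hb Hx). rewrite pow_1 in H. exact H.
  - intros y Hy. apply sgn_term_bound; auto.
Qed.

Definition DE (i c M : nat) : R := D 1 1 i c M - D 1 1 i c (2*M).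

Lemma lim_DE i c : (2 <= i)%nat -> (2 <= c)%nat -> is_lim_seq (DE i c) 0.
Proof.
  intros Hi Hc.
  assert (Hterm : forall z, (1 <= z)%nat -> 0 <= 1^z / INR z ^ c * P 1 i (pred z) <= / INR z ^ 2 * 2).
  { intros z Hz. rewrite pow1. pose proof (INR_ge1 z Hz).
    pose proof (P1_nonneg i (pred z)). pose proof (P1_le2 i (pred z) Hi).
    assert (0 < 1 / INR z ^ c) by (apply Rdiv_lt_0_compat; [lra|apply pow_lt; lra]).
    split. apply Rmult_le_pos; lra.
    apply Rmult_le_compat; try lra. unfold Rdiv. rewrite Rmult_1_l. apply inv_pow_le; auto. }
  destruct (mono_lim (D 1 1 i c) 4) as [l Hl].
  - intros n. unfold D. cbn [sm]. pose proof (Hterm (S n) ltac:(lia)). lra.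
  - intros n. unfold D. eapply Rle_trans. apply (sm_le _ (fun z => / INR z ^ 2 * 2)).
    intros k Hk. apply Hterm; lia. rewrite sm_scal_r. pose proof (sm_inv2' n). lra.
  - unfold DE. replace (Finite 0) with (Finite (l - l)) by (f_equal; ring).
    apply is_lim_seq_minus'; auto. apply subseq2; auto.
Qed.

Definition E1 (M : nat) : R := ((1280/31) * XT (-1) 1 1 6 (2*M) + ((-6212/31) * P (-1) 7 (2*M) + ((1032/31) * Sq (-1) 2 1 5 (2*M) + ((-516/31) * XT (-1) 2 1 5 (2*M) + ((132/31) * XT (-1) 3 1 4 (2*M) + ((504/31) * XT (-1) 4 1 3 (2*M) + ((2520/31) * Sq (-1) 5 1 2 (2*M) + ((-1260/31) * XT (-1) 5 1 2 (2*M) + ((2520/31) * XT (-1) 6 1 1 (2*M) + ((380/31) * XT (-1) 4 (-1) 3 (2*M) + ((-2424/31) * P 1 7 (2*M) + ((1528/31) * Sq (-1) 5 (-1) 2 (2*M) + ((-764/31) * XT (-1) 5 (-1) 2 (2*M) + ((1280/31) * XT (-1) 6 (-1) 1 (2*M) + (4/31) * DE 3 4 M)))))))))))))).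
Definition L1 : R := ((1280/31) * 0 + ((-6212/31) * Lm (-1) 7 + ((1032/31) * (Lm (-1) 2 * Lm 1 5) + ((-516/31) * 0 + ((132/31) * 0 + ((504/31) * 0 + ((2520/31) * (Lm (-1) 5 * Lm 1 2) + ((-1260/31) * 0 + ((2520/31) * 0 + ((380/31) * 0 + ((-2424/31) * Lm 1 7 + ((1528/31) * (Lm (-1) 5 * Lm (-1) 2) + ((-764/31) * 0 + ((1280/31) * 0 + (4/31) * 0)))))))))))))).
Lemma fin1 M : sm (fun k => oddHarm 3 k / INR k ^ 4) M = E1 M.
Proof.
  rewrite target. replace (2 ^ 4 / 4) with (4) by (simpl; field).
  pose proof (stuffle (-1) 1 1 6 (-1) 7 (2*M) ltac:(ring) eq_refl).
  pose proof (torn_1_6 (-1) 1 (-1) (2*M) ltac:(ring) ltac:(ring) ltac:(ring)).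
  assert (XT (-1) 1 1 6 (2*M) = Sq (-1) 1 1 6 (2*M) - Tr (-1) 1 1 6 (2*M)) by reflexivity.
  pose proof (stuffle (-1) 2 1 5 (-1) 7 (2*M) ltac:(ring) eq_refl).
  pose proof (stuffle (-1) 2 1 5 (-1) 7 (2*M) ltac:(ring) eq_refl).
  pose proof (torn_2_5 (-1) 1 (-1) (2*M) ltac:(ring) ltac:(ring) ltac:(ring)).
  assert (XT (-1) 2 1 5 (2*M) = Sq (-1) 2 1 5 (2*M) - Tr (-1) 2 1 5 (2*M)) by reflexivity.
  pose proof (stuffle (-1) 3 1 4 (-1) 7 (2*M) ltac:(ring) eq_refl).
  pose proof (torn_3_4 (-1) 1 (-1) (2*M) ltac:(ring) ltac:(ring) ltac:(ring)).
  assert (XT (-1) 3 1 4 (2*M) = Sq (-1) 3 1 4 (2*M) - Tr (-1) 3 1 4 (2*M)) by reflexivity.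
  pose proof (stuffle (-1) 4 1 3 (-1) 7 (2*M) ltac:(ring) eq_refl).
  pose proof (torn_4_3 (-1) 1 (-1) (2*M) ltac:(ring) ltac:(ring) ltac:(ring)).
  assert (XT (-1) 4 1 3 (2*M) = Sq (-1) 4 1 3 (2*M) - Tr (-1) 4 1 3 (2*M)) by reflexivity.
  pose proof (stuffle (-1) 5 1 2 (-1) 7 (2*M) ltac:(ring) eq_refl).
  pose proof (stuffle (-1) 5 1 2 (-1) 7 (2*M) ltac:(ring) eq_refl).
  pose proof (torn_5_2 (-1) 1 (-1) (2*M) ltac:(ring) ltac:(ring) ltac:(ring)).
  assert (XT (-1) 5 1 2 (2*M) = Sq (-1) 5 1 2 (2*M) - Tr (-1) 5 1 2 (2*M)) by reflexivity.
  pose proof (stuffle (-1) 6 1 1 (-1) 7 (2*M) ltac:(ring) eq_refl).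
  pose proof (torn_6_1 (-1) 1 (-1) (2*M) ltac:(ring) ltac:(ring) ltac:(ring)).
  assert (XT (-1) 6 1 1 (2*M) = Sq (-1) 6 1 1 (2*M) - Tr (-1) 6 1 1 (2*M)) by reflexivity.
  pose proof (stuffle (-1) 4 (-1) 3 1 7 (2*M) ltac:(ring) eq_refl).
  pose proof (torn_4_3 (-1) (-1) 1 (2*M) ltac:(ring) ltac:(ring) ltac:(ring)).
  assert (XT (-1) 4 (-1) 3 (2*M) = Sq (-1) 4 (-1) 3 (2*M) - Tr (-1) 4 (-1) 3 (2*M)) by reflexivity.
  pose proof (stuffle (-1) 5 (-1) 2 1 7 (2*M) ltac:(ring) eq_refl).
  pose proof (stuffle (-1) 5 (-1) 2 1 7 (2*M) ltac:(ring) eq_refl).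
  pose proof (torn_5_2 (-1) (-1) 1 (2*M) ltac:(ring) ltac:(ring) ltac:(ring)).
  assert (XT (-1) 5 (-1) 2 (2*M) = Sq (-1) 5 (-1) 2 (2*M) - Tr (-1) 5 (-1) 2 (2*M)) by reflexivity.
  pose proof (stuffle (-1) 6 (-1) 1 1 7 (2*M) ltac:(ring) eq_refl).
  pose proof (torn_6_1 (-1) (-1) 1 (2*M) ltac:(ring) ltac:(ring) ltac:(ring)).
  assert (XT (-1) 6 (-1) 1 (2*M) = Sq (-1) 6 (-1) 1 (2*M) - Tr (-1) 6 (-1) 1 (2*M)) by reflexivity.
  pose proof (dist 3 4 M) as Hd. replace (4 / 2 ^ (3+4)%nat) with (1/32) in Hd by (simpl; field).
  assert (DE 3 4 M = D 1 1 3 4 M - D 1 1 3 4 (2*M)) by reflexivity.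
  unfold E1. lra.
Qed.
Lemma lim1 : is_lim_seq E1 L1.
Proof.
  unfold E1, L1. apply is_lim_seq_plus'; [apply lim_scal; apply lim_XT; (ring || lia) | apply is_lim_seq_plus'; [apply lim_scal; apply lim_P; (ring || lia) | apply is_lim_seq_plus'; [apply lim_scal; apply lim_Sq; (ring || lia) | apply is_lim_seq_plus'; [apply lim_scal; apply lim_XT; (ring || lia) | apply is_lim_seq_plus'; [apply lim_scal; apply lim_XT; (ring || lia) | apply is_lim_seq_plus'; [apply lim_scal; apply lim_XT'; (ring || lia) | apply is_lim_seq_plus'; [apply lim_scal; apply lim_Sq; (ring || lia) | apply is_lim_seq_plus'; [apply lim_scal; apply lim_XT'; (ring || lia) | apply is_lim_seq_plus'; [apply lim_scal; apply lim_XT'; (ring || lia) | apply is_lim_seq_plus'; [apply lim_scal; apply lim_XT'; (ring || lia) | apply is_lim_seq_plus'; [apply lim_scal; apply lim_P; (ring || lia) | apply is_lim_seq_plus'; [apply lim_scal; apply lim_Sq; (ring || lia) | apply is_lim_seq_plus'; [apply lim_scal; apply lim_XT'; (ring || lia) | apply is_lim_seq_plus'; [apply lim_scal; apply lim_XT'; (ring || lia) | apply lim_scal; apply lim_DE; lia]]]]]]]]]]]]]].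
Qed.
Definition E2 (M : nat) : R := ((-640/31) * XT (-1) 1 1 6 (2*M) + ((3544/31) * P (-1) 7 (2*M) + ((-764/31) * Sq (-1) 2 1 5 (2*M) + ((382/31) * XT (-1) 2 1 5 (2*M) + ((-126/31) * Sq (-1) 3 1 4 (2*M) + ((-128/31) * XT (-1) 3 1 4 (2*M) + ((-126/31) * Sq (-1) 4 1 3 (2*M) + ((-252/31) * XT (-1) 4 1 3 (2*M) + ((-1260/31) * Sq (-1) 5 1 2 (2*M) + ((630/31) * XT (-1) 5 1 2 (2*M) + ((-1260/31) * XT (-1) 6 1 1 (2*M) + ((-2/31) * Sq (-1) 4 (-1) 3 (2*M) + ((1028/31) * P 1 7 (2*M) + ((-128/31) * XT (-1) 4 (-1) 3 (2*M) + ((-516/31) * Sq (-1) 5 (-1) 2 (2*M) + ((258/31) * XT (-1) 5 (-1) 2 (2*M) + ((-640/31) * XT (-1) 6 (-1) 1 (2*M) + (2/31) * DE 4 3 M))))))))))))))))).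
Definition L2 : R := ((-640/31) * 0 + ((3544/31) * Lm (-1) 7 + ((-764/31) * (Lm (-1) 2 * Lm 1 5) + ((382/31) * 0 + ((-126/31) * (Lm (-1) 3 * Lm 1 4) + ((-128/31) * 0 + ((-126/31) * (Lm (-1) 4 * Lm 1 3) + ((-252/31) * 0 + ((-1260/31) * (Lm (-1) 5 * Lm 1 2) + ((630/31) * 0 + ((-1260/31) * 0 + ((-2/31) * (Lm (-1) 4 * Lm (-1) 3) + ((1028/31) * Lm 1 7 + ((-128/31) * 0 + ((-516/31) * (Lm (-1) 5 * Lm (-1) 2) + ((258/31) * 0 + ((-640/31) * 0 + (2/31) * 0))))))))))))))))).
Lemma fin2 M : sm (fun k => oddHarm 4 k / INR k ^ 3) M = E2 M.
Proof.
  rewrite target. replace (2 ^ 3 / 4) with (2) by (simpl; field).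
  pose proof (stuffle (-1) 1 1 6 (-1) 7 (2*M) ltac:(ring) eq_refl).
  pose proof (torn_1_6 (-1) 1 (-1) (2*M) ltac:(ring) ltac:(ring) ltac:(ring)).
  assert (XT (-1) 1 1 6 (2*M) = Sq (-1) 1 1 6 (2*M) - Tr (-1) 1 1 6 (2*M)) by reflexivity.
  pose proof (stuffle (-1) 2 1 5 (-1) 7 (2*M) ltac:(ring) eq_refl).
  pose proof (stuffle (-1) 2 1 5 (-1) 7 (2*M) ltac:(ring) eq_refl).
  pose proof (torn_2_5 (-1) 1 (-1) (2*M) ltac:(ring) ltac:(ring) ltac:(ring)).
  assert (XT (-1) 2 1 5 (2*M) = Sq (-1) 2 1 5 (2*M) - Tr (-1) 2 1 5 (2*M)) by reflexivity.
  pose proof (stuffle (-1) 3 1 4 (-1) 7 (2*M) ltac:(ring) eq_refl).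
  pose proof (stuffle (-1) 3 1 4 (-1) 7 (2*M) ltac:(ring) eq_refl).
  pose proof (torn_3_4 (-1) 1 (-1) (2*M) ltac:(ring) ltac:(ring) ltac:(ring)).
  assert (XT (-1) 3 1 4 (2*M) = Sq (-1) 3 1 4 (2*M) - Tr (-1) 3 1 4 (2*M)) by reflexivity.
  pose proof (stuffle (-1) 4 1 3 (-1) 7 (2*M) ltac:(ring) eq_refl).
  pose proof (stuffle (-1) 4 1 3 (-1) 7 (2*M) ltac:(ring) eq_refl).
  pose proof (torn_4_3 (-1) 1 (-1) (2*M) ltac:(ring) ltac:(ring) ltac:(ring)).
  assert (XT (-1) 4 1 3 (2*M) = Sq (-1) 4 1 3 (2*M) - Tr (-1) 4 1 3 (2*M)) by reflexivity.
  pose proof (stuffle (-1) 5 1 2 (-1) 7 (2*M) ltac:(ring) eq_refl).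
  pose proof (stuffle (-1) 5 1 2 (-1) 7 (2*M) ltac:(ring) eq_refl).
  pose proof (torn_5_2 (-1) 1 (-1) (2*M) ltac:(ring) ltac:(ring) ltac:(ring)).
  assert (XT (-1) 5 1 2 (2*M) = Sq (-1) 5 1 2 (2*M) - Tr (-1) 5 1 2 (2*M)) by reflexivity.
  pose proof (stuffle (-1) 6 1 1 (-1) 7 (2*M) ltac:(ring) eq_refl).
  pose proof (torn_6_1 (-1) 1 (-1) (2*M) ltac:(ring) ltac:(ring) ltac:(ring)).
  assert (XT (-1) 6 1 1 (2*M) = Sq (-1) 6 1 1 (2*M) - Tr (-1) 6 1 1 (2*M)) by reflexivity.
  pose proof (stuffle (-1) 4 (-1) 3 1 7 (2*M) ltac:(ring) eq_refl).
  pose proof (stuffle (-1) 4 (-1) 3 1 7 (2*M) ltac:(ring) eq_refl).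
  pose proof (torn_4_3 (-1) (-1) 1 (2*M) ltac:(ring) ltac:(ring) ltac:(ring)).
  assert (XT (-1) 4 (-1) 3 (2*M) = Sq (-1) 4 (-1) 3 (2*M) - Tr (-1) 4 (-1) 3 (2*M)) by reflexivity.
  pose proof (stuffle (-1) 5 (-1) 2 1 7 (2*M) ltac:(ring) eq_refl).
  pose proof (stuffle (-1) 5 (-1) 2 1 7 (2*M) ltac:(ring) eq_refl).
  pose proof (torn_5_2 (-1) (-1) 1 (2*M) ltac:(ring) ltac:(ring) ltac:(ring)).
  assert (XT (-1) 5 (-1) 2 (2*M) = Sq (-1) 5 (-1) 2 (2*M) - Tr (-1) 5 (-1) 2 (2*M)) by reflexivity.
  pose proof (stuffle (-1) 6 (-1) 1 1 7 (2*M) ltac:(ring) eq_refl).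
  pose proof (torn_6_1 (-1) (-1) 1 (2*M) ltac:(ring) ltac:(ring) ltac:(ring)).
  assert (XT (-1) 6 (-1) 1 (2*M) = Sq (-1) 6 (-1) 1 (2*M) - Tr (-1) 6 (-1) 1 (2*M)) by reflexivity.
  pose proof (dist 4 3 M) as Hd. replace (4 / 2 ^ (4+3)%nat) with (1/32) in Hd by (simpl; field).
  assert (DE 4 3 M = D 1 1 4 3 M - D 1 1 4 3 (2*M)) by reflexivity.
  unfold E2. lra.
Qed.
Lemma lim2 : is_lim_seq E2 L2.
Proof.
  unfold E2, L2. apply is_lim_seq_plus'; [apply lim_scal; apply lim_XT; (ring || lia) | apply is_lim_seq_plus'; [apply lim_scal; apply lim_P; (ring || lia) | apply is_lim_seq_plus'; [apply lim_scal; apply lim_Sq; (ring || lia) | apply is_lim_seq_plus'; [apply lim_scal; apply lim_XT; (ring || lia) | apply is_lim_seq_plus'; [apply lim_scal; apply lim_Sq; (ring || lia) | apply is_lim_seq_plus'; [apply lim_scal; apply lim_XT; (ring || lia) | apply is_lim_seq_plus'; [apply lim_scal; apply lim_Sq; (ring || lia) | apply is_lim_seq_plus'; [apply lim_scal; apply lim_XT'; (ring || lia) | apply is_lim_seq_plus'; [apply lim_scal; apply lim_Sq; (ring || lia) | apply is_lim_seq_plus'; [apply lim_scal; apply lim_XT'; (ring || lia) | apply is_lim_seq_plus'; [apply lim_scal; apply lim_XT'; (ring || lia) | apply is_lim_seq_plus'; [apply lim_scal; apply lim_Sq; (ring || lia) | apply is_lim_seq_plus'; [apply lim_scal; apply lim_P;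 (ring || lia) | apply is_lim_seq_plus'; [apply lim_scal; apply lim_XT'; (ring || lia) | apply is_lim_seq_plus'; [apply lim_scal; apply lim_Sq; (ring || lia) | apply is_lim_seq_plus'; [apply lim_scal; apply lim_XT'; (ring || lia) | apply is_lim_seq_plus'; [apply lim_scal; apply lim_XT'; (ring || lia) | apply lim_scal; apply lim_DE; lia]]]]]]]]]]]]]]]]].
Qed.


Lemma Zk a q : (2 <= a)%nat -> / 2^a = q -> q <> 1 -> Zv a = lambdaS a / (1 - q).
Proof. intros Ha Hq Hq1. pose proof (Z_eq a Ha) as H. rewrite Hq in H.
  field_simplify_eq; [|intro; apply Hq1; lra]. lra. Qed.

Lemma sig_lim (i c : nat) (E : nat -> R) (L : R) :
  (forall M, sm (fun k => oddHarm i k / INR k ^ c) M = E M) -> is_lim_seq E L ->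
  sigmaST c i = L.
Proof.
  intros Hf Hl. unfold sigmaST. apply is_series_unique. apply series_of_lim.
  apply (is_lim_seq_ext (fun M => E (S M))).
  { intros M. rewrite <- Hf. rewrite sum_n_sm. apply sm_ext. intros k Hk.
    replace (S (k-1)) with k by lia. reflexivity. }
  apply (is_lim_seq_incr_1 E L). exact Hl.
Qed.

Theorem mainTheorem20 :
  sigmaST 4 3 = 120 * lambdaS 7 - 96 * lambdaS 2 * lambdaS 5 /\
  sigmaST 3 4 = - 80 * lambdaS 7 + 8 * lambdaS 3 * lambdaS 4
              + 176 / 3 * lambdaS 2 * lambdaS 5.
Proof.
  assert (Z2 : Zv 2 = lambdaS 2 / (1 - 1/4)) by (apply Zk; [lia|simpl; field|lra]).
  assert (Z3 : Zv 3 = lambdaS 3 / (1 - 1/8)) by (apply Zk; [lia|simpl; field|lra]).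
  assert (Z4 : Zv 4 = lambdaS 4 / (1 - 1/16)) by (apply Zk; [lia|simpl; field|lra]).
  assert (Z5 : Zv 5 = lambdaS 5 / (1 - 1/32)) by (apply Zk; [lia|simpl; field|lra]).
  assert (Z7 : Zv 7 = lambdaS 7 / (1 - 1/128)) by (apply Zk; [lia|simpl; field|lra]).
  split.
  - rewrite (sig_lim 3 4 E1 L1 fin1 lim1).
    unfold L1, Lm. rewrite Z2, Z5, Z7. field.
  - rewrite (sig_lim 4 3 E2 L2 fin2 lim2).
    unfold L2, Lm. rewrite Z2, Z3, Z4, Z5, Z7. field.
Qed.
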